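(* In the setting described in the context, for every $\delta\le\delta_0$ and every $k\ge0$, the tubular neighborhood $$T_k(\delta)=\gamma_k\big(B(\gamma_k^{-1}L_k,\delta)\big)$$ of $L_k$ is disjoint from $L_{k+1}$.
   Context: $\mathbb{R}^{2,1}$ is $\mathbb{R}^3$ with $\mathbb{B}(u,v)=u_1v_1+u_2v_2-u_3v_3$; $\mathbb{E}$ is the affine space modelled on it; $\operatorname{Isom}^0(\mathbb{E})$ consists of maps $x\mapsto gx+b$ with $g\in\mathrm{SO}^0(2,1)$. $\rho$ is Euclidean distance and $B(S,\delta)$ the open Euclidean $\delta$-neighborhood. Crooked planes: with $v_0=(1,0,0)$, $S_0=\{(0,u_2,u_3):|u_3|\ge|u_2|\}$, $W_0^\mp=\{\pm u_1\le 0$ ... $\}$ precisely $W_0^-=\{u_1\le0,u_2=u_3\}$, $W_0^+=\{u_1\ge0,u_2=-u_3\}$, $\mathcal{C}_0=W_0^-\cup S_0\cup W_0^+$; for unit-spacelike $u$ and $g\in\mathrm{SO}^0(2,1)$ with $gv_0=u$, $\mathcal{C}(u,p)=p+g(\mathcal{C}_0)$ has vertex $p$ and stem $p+g(S_0)$; the crooked half-space $\mathcal{H}(u,p)$ is the component of $\mathbb{E}-\mathcal{C}(u,p)$ containing $p+\{w:\mathbb{B}(w,w)<0,w_3>0,\mathbb{B}(w,u)>0\}$, and its angle is the length of the arc $\{w\in S^1:\mathbb{B}(w,u)>0\}$ of $S^1=\{(\cos\phi,\sin\phi,1)\}$. Setting: $h_1,\dots,h_m\in\operatorname{Isom}^0(\mathbb{E})$,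 pairwise disjoint crooked half-spaces $\mathcal{H}_i^j$ ($(i,j)\in\{1,\dots,m\}\times\{+1,-1\}$) with $h_i(\mathcal{H}_i^-)=\mathbb{E}-\overline{\mathcal{H}_i^+}$, $\Gamma=\langle h_1,\dots,h_m\rangle$, $h_i^j:=h_i^{\,j}$, $X=\mathbb{E}-\bigcup\overline{\mathcal{H}_i^j}$. $\delta_0>0$ is such that $B(\mathbb{E}-\mathcal{H}_i^j,\delta_0)\subset\mathbb{E}-h_i^j\overline{\mathcal{H}_{i'}^{j'}}$ whenever $(i,j)\ne(i',-j')$. A point $p\in\mathbb{E}-\Gamma\overline{X}$ is given, together with a sequence $(i_k,j_k)_{k\ge0}$ with $(i_k,j_k)\ne(i_{k+1},-j_{k+1})$, elements $\gamma_k=h_{i_0}^{j_0}\cdots h_{i_{k-1}}^{j_{k-1}}$, and crooked half-spaces $\mathfrak{H}_k=\gamma_k\mathcal{H}_{i_k}^{j_k}$ with $\mathfrak{H}_k\supsetneq\mathfrak{H}_{k+1}$, $p\in\mathfrak{H}_k$, and the angle of $\mathfrak{H}_0$ less than $\pi/2$. $P$ is an affine plane through $p$ whose direction is a definite plane (on which $\mathbb{B}$ is positive definite) and which contains the vertex of no crooked plane $\gamma\partial\mathcal{H}_i^j$; then each $\partial\mathfrak{H}_k\cap P$ is a zigzag (two rays joined by a segment, the intersection of $P$ with the stem), whose vertices are the endpoints of this segment. $\nu$ is a line in $P$ parallel to the segment $P\cap(\text{stem of }\partial\mathfrak{H}_0)$. For each $k$, $L_k\subset P$ is the line perpendicular (in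 the Euclidean sense) to $\nu$ which bounds a half-plane $\Pi_k\subset P$ containing $\mathfrak{H}_k\cap P$ and passes through a vertex of the zigzag $\partial\mathfrak{H}_k\cap P$. *)

(* Defs.v *)
From HB Require Import structures.
From mathcomp Require Import all_boot all_order all_algebra.
From mathcomp Require Import all_classical all_reals all_analysis.
Set Implicit Arguments. Unset Strict Implicit. Unset Printing Implicit Defensive.
Import Order.TTheory GRing.Theory Num.Theory.
Import numFieldNormedType.Exports.
Local Open Scope classical_set_scope.
Local Open Scope ring_scope.

Section Minkowski.
Variable R : realType.

Notation vec := 'cV[R]_3.

Definition c1 (x : vec) : R := x (inord 0) 0.
Definition c2 (x : vec) : R := x (inord 1) 0.
Definition c3 (x : vec) : R := x (inord 2) 0.

Definition mkv (a b c : R) : vec := \col_(i < 3) nth 0 [:: a; b; c] i.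

Definition Bform (u v : vec) : R := c1 u * c1 v + c2 u * c2 v - c3 u * c3 v.

(* SO^0(2,1): preserves B, det 1, time-orientation preserving (g_33 > 0) *)
Definition SO0 (g : 'M[R]_3) : Prop :=
  (forall u v, Bform (g *m u) (g *m v) = Bform u v) /\ \det g = 1 /\
  0 < g (inord 2) (inord 2).

(* an element of Isom^0(E) is a pair (g,b), acting by x |-> g x + b *)
Definition act (h : 'M[R]_3 * vec) (x : vec) : vec := h.1 *m x + h.2.
Definition actinv (h : 'M[R]_3 * vec) (x : vec) : vec := invmx h.1 *m (x - h.2).
(* h^j with j : bool, true = +1, false = -1 *)
Definition hpow (h : 'M[R]_3 * vec) (j : bool) : vec -> vec :=
  if j then act h else actinv h.

Definition rho (x y : vec) : R := Num.sqrt (\sum_(i < 3) (x i 0 - y i 0) ^+ 2).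
Definition nbhd (S : set vec) (d : R) : set vec :=
  [set x | exists2 s, S s & rho x s < d].
Definition dot (x y : vec) : R := \sum_(i < 3) x i 0 * y i 0.

Definition v0 : vec := mkv 1 0 0.
Definition S0 : set vec := [set x | c1 x = 0 /\ `|c2 x| <= `|c3 x|].
Definition W0m : set vec := [set x | c1 x <= 0 /\ c2 x = c3 x].
Definition W0p : set vec := [set x | 0 <= c1 x /\ c2 x = - c3 x].
Definition C0 : set vec := W0m `|` S0 `|` W0p.

Definition crooked_plane (u p : vec) : set vec :=
  [set x | exists g y, [/\ SO0 g, g *m v0 = u, C0 y & x = p + g *m y]].
Definition stem (u p : vec) : set vec :=
  [set x | exists g y, [/\ SO0 g, g *m v0 = u, S0 y & x = p + g *m y]].
Definition crooked_halfspace (u p : vec) : set vec :=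
  [set x | exists w, [/\ Bform w w < 0, 0 < c3 w, 0 < Bform w u &
            connected_component (~` crooked_plane u p) (p + w) x]].

Definition angle (u : vec) : \bar R :=
  lebesgue_measure [set t : R | (0 <= t < pi *+ 2) /\
                               0 < Bform (mkv (cos t) (sin t) 1) u].

Inductive in_Gamma (m : nat) (h : 'I_m -> 'M[R]_3 * vec) : (vec -> vec) -> Prop :=
| Gamma_id : in_Gamma h id
| Gamma_step f i j : in_Gamma h f -> in_Gamma h (f \o hpow (h i) j).

Fixpoint gam (m : nat) (h : 'I_m -> 'M[R]_3 * vec) (s : nat -> 'I_m * bool)
  (k : nat) : vec -> vec :=
  match k with
  | 0 => id
  | k'.+1 => gam h s k' \o hpow (h (s k').1) (s k').2
  end.

Definition plane (p a b : vec) : set vec :=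
  [set x | exists s t : R, x = p + s *: a + t *: b].
Definition definite_dir (a b : vec) : Prop :=
  forall s t : R, (s, t) != (0, 0) ->
    0 < Bform (s *: a + t *: b) (s *: a + t *: b).

Definition segment (v w : vec) : set vec :=
  [set x | exists t : R, 0 <= t <= 1 /\ x = (1 - t) *: v + t *: w].
Definition line (n0 d : vec) : set vec := [set x | exists t : R, x = n0 + t *: d].

End Minkowski.

(* Main.v *)
Require Import Defs.
From HB Require Import structures.
From mathcomp Require Import all_boot all_order all_algebra.
From mathcomp Require Import all_classical all_reals all_analysis.
From mathcomp Require Import ring lra.
Import Order.TTheory GRing.Theory Num.Theory.
Import numFieldNormedType.Exports.
Local Open Scope classical_set_scope.
Local Open Scope ring_scope.
Set Implicit Arguments. Unset Strict Implicit. Unset Printing Implicit Defensive.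

Section H.
Variable R : realType.
Notation vec := 'cV[R]_3.

Lemma inord0 : (inord 0 : 'I_3) = ord0. Proof. by apply: val_inj; rewrite /= inordK. Qed.
Definition o1 : 'I_3 := lift ord0 ord0.
Definition o2 : 'I_3 := lift ord0 (lift ord0 ord0).
Lemma inord1 : (inord 1 : 'I_3) = o1. Proof. by apply: val_inj; rewrite /= inordK. Qed.
Lemma inord2 : (inord 2 : 'I_3) = o2. Proof. by apply: val_inj; rewrite /= inordK. Qed.

Lemma sum3 (F : 'I_3 -> R) : \sum_(j < 3) F j = F ord0 + F o1 + F o2.
Proof. by rewrite !big_ord_recl big_ord0 addr0 addrA. Qed.

Lemma cE1 (x : vec) : c1 x = x ord0 0. Proof. by rewrite /c1 inord0. Qed.
Lemma cE2 (x : vec) : c2 x = x o1 0. Proof. by rewrite /c2 inord1. Qed.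
Lemma cE3 (x : vec) : c3 x = x o2 0. Proof. by rewrite /c3 inord2. Qed.

Lemma vec_eq (x y : vec) : c1 x = c1 y -> c2 x = c2 y -> c3 x = c3 y -> x = y.
Proof.
rewrite !cE1 !cE2 !cE3 => h1 h2 h3; apply/matrixP => i j.
rewrite (ord1 j); case: i => [[|[|[|n]]] Hi] //.
- by have -> : Ordinal Hi = ord0 by apply: val_inj.
- by have -> : Ordinal Hi = o1 by apply: val_inj.
- by have -> : Ordinal Hi = o2 by apply: val_inj.
Qed.

Lemma mkv1 (a b c : R) : c1 (mkv a b c) = a. Proof. by rewrite /c1 /mkv mxE inordK. Qed.
Lemma mkv2 (a b c : R) : c2 (mkv a b c) = b. Proof. by rewrite /c2 /mkv mxE inordK. Qed.
Lemma mkv3 (a b c : R) : c3 (mkv a b c) = c. Proof. by rewrite /c3 /mkv mxE inordK. Qed.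

Lemma c1D (x y : vec) : c1 (x + y) = c1 x + c1 y. Proof. by rewrite /c1 mxE. Qed.
Lemma c2D (x y : vec) : c2 (x + y) = c2 x + c2 y. Proof. by rewrite /c2 mxE. Qed.
Lemma c3D (x y : vec) : c3 (x + y) = c3 x + c3 y. Proof. by rewrite /c3 mxE. Qed.
Lemma c1N (x : vec) : c1 (- x) = - c1 x. Proof. by rewrite /c1 mxE. Qed.
Lemma c2N (x : vec) : c2 (- x) = - c2 x. Proof. by rewrite /c2 mxE. Qed.
Lemma c3N (x : vec) : c3 (- x) = - c3 x. Proof. by rewrite /c3 mxE. Qed.
Lemma c1Z a (x : vec) : c1 (a *: x) = a * c1 x. Proof. by rewrite /c1 mxE. Qed.
Lemma c2Z a (x : vec) : c2 (a *: x) = a * c2 x. Proof. by rewrite /c2 mxE. Qed.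
Lemma c3Z a (x : vec) : c3 (a *: x) = a * c3 x. Proof. by rewrite /c3 mxE. Qed.

Definition ent (g : 'M[R]_3) (i j : nat) := g (inord i) (inord j).
Lemma mulE1 (g : 'M[R]_3) x : c1 (g *m x) = ent g 0 0 * c1 x + ent g 0 1 * c2 x + ent g 0 2 * c3 x.
Proof. by rewrite /ent inord0 inord1 inord2 !cE1 cE2 cE3 mxE sum3. Qed.
Lemma mulE2 (g : 'M[R]_3) x : c2 (g *m x) = ent g 1 0 * c1 x + ent g 1 1 * c2 x + ent g 1 2 * c3 x.
Proof. by rewrite /ent inord0 inord1 inord2 cE1 !cE2 cE3 mxE sum3. Qed.
Lemma mulE3 (g : 'M[R]_3) x : c3 (g *m x) = ent g 2 0 * c1 x + ent g 2 1 * c2 x + ent g 2 2 * c3 x.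
Proof. by rewrite /ent inord0 inord1 inord2 cE1 cE2 !cE3 mxE sum3. Qed.

Ltac fixlift := repeat match goal with
 | |- context [@lift 3 ?a ?b] =>
    let t := constr:(@lift 3 a b) in
    (rewrite (_ : t = ord0); last by apply: val_inj) ||
    (rewrite (_ : t = o1); last by apply: val_inj) ||
    (rewrite (_ : t = o2); last by apply: val_inj)
 end.

Lemma det3 (g : 'M[R]_3) : \det g =
  ent g 0 0 * (ent g 1 1 * ent g 2 2 - ent g 1 2 * ent g 2 1)
  - ent g 1 0 * (ent g 0 1 * ent g 2 2 - ent g 0 2 * ent g 2 1)
  + ent g 2 0 * (ent g 0 1 * ent g 1 2 - ent g 0 2 * ent g 1 1).
Proof.
rewrite (expand_det_col _ ord0) sum3 /cofactor.
rewrite !(expand_det_col _ ord0) !big_ord_recl !big_ord0 /cofactor.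
rewrite !det_mx11 !mxE /ent inord0 inord1 inord2 /=.
fixlift.
rewrite !addn0 ?add0n /=. ring.
Qed.

Lemma eqr_ring (x y x' y' : R) : x = y -> x' = x -> y' = y -> x' = y'.
Proof. by move=> -> -> ->. Qed.

Lemma abs_sq (x y : R) : (`|x| <= `|y|) = (x ^+ 2 <= y ^+ 2).
Proof.
by rewrite -(real_normK (num_real x)) -(real_normK (num_real y)) ler_sqr // nnegrE.
Qed.

Lemma Bv0 (z : vec) : Bform (v0 R) z = c1 z.
Proof. by rewrite /Bform /v0 mkv1 mkv2 mkv3; ring. Qed.

Lemma stab_k (k : 'M[R]_3) (y : vec) : k *m v0 R = v0 R ->
  (forall x y, Bform (k *m x) (k *m y) = Bform x y) -> \det k = 1 ->
  C0 y -> C0 (k *m y).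
Proof.
move=> kv kB kd Cy.
pose e1 : vec := mkv 0 1 0. pose e2 : vec := mkv 0 0 1.
have E0 := kv. 
have h00 : ent k 0 0 = 1 by have := congr1 (@c1 R) kv; rewrite mulE1 /v0 !mkv1 mkv2 mkv3; lra.
have h10 : ent k 1 0 = 0 by have := congr1 (@c2 R) kv; rewrite mulE2 /v0 !mkv1 !mkv2 mkv3; lra.
have h20 : ent k 2 0 = 0 by have := congr1 (@c3 R) kv; rewrite mulE3 /v0 !mkv1 mkv2 !mkv3; lra.
have h01 : ent k 0 1 = 0.
  by have := kB (v0 R) e1; rewrite kv !Bv0 mulE1 /e1 !mkv1 mkv2 mkv3; lra.
have h02 : ent k 0 2 = 0.
  by have := kB (v0 R) e2; rewrite kv !Bv0 mulE1 /e2 !mkv1 mkv2 mkv3; lra.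
have E3 := kB e1 e1. have E4 := kB e2 e2. have E5 := kB e1 e2.
rewrite /Bform !mulE1 !mulE2 !mulE3 /e1 /e2 !mkv1 !mkv2 !mkv3 in E3 E4 E5.
rewrite det3 in kd.
move: E3 E4 E5 kd; rewrite h00 h10 h20 h01 h02.
set a := ent k 1 1; set b := ent k 1 2; set c := ent k 2 1; set d := ent k 2 2.
move=> E3 E4 E5 kd.
have E3' : a ^+ 2 - c ^+ 2 = 1 by apply: (eqr_ring E3); ring.
have E4' : b ^+ 2 - d ^+ 2 = -1 by apply: (eqr_ring E4); ring.
have E5' : a * b - c * d = 0 by apply: (eqr_ring E5); ring.
have kd' : a * d - b * c = 1 by apply: (eqr_ring kd); ring.
have hda : d = a.
  apply/eqP; rewrite -subr_eq0; apply/eqP.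
  have -> : d - a = a * (a * d - b * c - 1) - d * (a ^+ 2 - c ^+ 2 - 1) - c * (c * d - a * b) by ring.
  have E5n : c * d - a * b = 0 by apply/eqP; rewrite -oppr_eq0 opprB E5'.
  by rewrite kd' E3' E5n !subrr !mulr0 !subr0.
have hcb : c = b.
  apply/eqP; rewrite -subr_eq0; apply/eqP.
  have -> : c - b = b * (a * d - b * c - 1) + c * (b ^+ 2 - d ^+ 2 + 1) - d * (a * b - c * d) by ring.
  by rewrite kd' E4' E5' subrr addNr !mulr0 addr0 subr0.
have X1 : c1 (k *m y) = c1 y by rewrite mulE1 h00 h01 h02; ring.
have X2 : c2 (k *m y) = a * c2 y + b * c3 y by rewrite mulE2 h10 -/a -/b; ring.
have X3 : c3 (k *m y) = b * c2 y + a * c3 y by rewrite mulE3 h20 -/c -/d hda hcb; ring.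
rewrite hcb in E3'.
case: Cy => [[Cy|Cy]|Cy].
- left; left; rewrite /W0m /= X1 X2 X3; case: Cy => -> ->; split => //; ring.
- left; right; rewrite /S0 /= X1 X2 X3; case: Cy => -> Hy; split => //.
  rewrite abs_sq -subr_ge0; rewrite abs_sq in Hy.
  have -> : (b * c2 y + a * c3 y) ^+ 2 - (a * c2 y + b * c3 y) ^+ 2 = (a ^+ 2 - b ^+ 2) * (c3 y ^+ 2 - c2 y ^+ 2) by ring.
  by rewrite E3' mul1r subr_ge0.
- right; rewrite /W0p /= X1 X2 X3; case: Cy => -> ->; split => //; ring.
Qed.

Lemma SO0_unit (g : 'M[R]_3) : SO0 g -> g \in unitmx.
Proof. by case=> _ [hd _]; rewrite unitmxE hd unitr1. Qed.

Lemma stab (g g' : 'M[R]_3) (y : vec) : SO0 g -> SO0 g' -> g *m v0 R = g' *m v0 R ->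
  C0 y -> C0 (invmx g *m (g' *m y)).
Proof.
move=> Sg Sg' hv Cy; have ug := SO0_unit Sg.
rewrite mulmxA; apply: stab_k => //.
- by rewrite -mulmxA -hv mulKmx.
- move=> x z; rewrite -(proj1 Sg) !mulmxA !mulmxV // !mul1mx.
  exact: (proj1 Sg').
- by rewrite det_mulmx det_inv (proj1 (proj2 Sg)) (proj1 (proj2 Sg')) invr1 mulr1.
Qed.

Lemma addKr2 (a b c : vec) : (a + c) - (b + c) = a - b.
Proof. by rewrite opprD addrACA subrr addr0. Qed.

Definition affine (f : vec -> vec) := exists (M : 'M[R]_3) (c : vec), forall x, f x = M *m x + c.

Lemma affine_hpow (h : 'M[R]_3 * vec) j : affine (hpow h j).
Proof.
case: j; first by exists h.1, h.2.
exists (invmx h.1), (- (invmx h.1 *m h.2)) => x.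
by rewrite /= /actinv mulmxBr.
Qed.

Lemma affine_comp f g : affine f -> affine g -> affine (f \o g).
Proof.
move=> [M [c hf]] [N [d hg]]; exists (M *m N), (M *m d + c) => x.
by rewrite /= hf hg mulmxDr mulmxA addrA.
Qed.

Lemma affine_gam m (h : 'I_m -> 'M[R]_3 * vec) s k : affine (gam h s k).
Proof.
elim: k => [|k IH]; first by exists 1%:M, 0 => x; rewrite mul1mx addr0.
exact: affine_comp IH (affine_hpow _ _).
Qed.

Lemma affine_tr f x y z : affine f -> f (x + (z - y)) = f x + (f z - f y).
Proof. by move=> [M [c hf]]; rewrite !hf mulmxDr mulmxBr addKr2 addrAC. Qed.

Lemma affine_seg f x z (t : R) : affine f -> f (x + t *: (z - x)) = f x + t *: (f z - f x).
Proof.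
move=> [M [c hf]]; rewrite !hf mulmxDr -scalemxAr mulmxBr.
by rewrite addKr2 addrAC.
Qed.

Lemma hpow_surj (h : 'M[R]_3 * vec) j : h.1 \in unitmx -> forall x, exists y, hpow h j y = x.
Proof.
move=> u x; case: j.
- by exists (actinv h x); rewrite /= /act /actinv mulKVmx // subrK.
- by exists (act h x); rewrite /= /act /actinv addrK mulKmx.
Qed.

Lemma gam_surj m (h : 'I_m -> 'M[R]_3 * vec) s k : (forall i, SO0 (h i).1) ->
  forall x, exists y, gam h s k y = x.
Proof.
move=> hS; elim: k => [|k IH] x; first by exists x.
have [y1 <-] := IH x.
have [y2 <-] := hpow_surj (s k).2 (SO0_unit (hS (s k).1)) y1.
by exists y2.
Qed.

Lemma phi_cont (x e : vec) : continuous (fun t : R => x + t *: e).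
Proof.
move=> t; apply: cvgD; first exact: cvg_cst.
by apply: cvgZr_tmp; exact: cvg_id.
Qed.

Lemma comp_seg (A : set vec) x0 x e (tau : R) : 0 <= tau ->
  connected_component A x0 x -> (forall t, 0 <= t <= tau -> A (x + t *: e)) ->
  connected_component A x0 (x + tau *: e).
Proof.
move=> t0 cx hA; apply: (connected_component_trans cx).
pose S := (fun t : R => x + t *: e) @` `[0, tau].
have sub : S `<=` connected_component A x.
  apply: connected_component_max.
  - by exists 0; [rewrite /= in_itv /= lexx t0 | rewrite scale0r addr0].
  - by move=> _ [t /= ht <-]; apply: hA; rewrite in_itv /= in ht.
  - apply: connected_continuous_connected; first exact: segment_connected.
    exact/continuous_subspaceT/phi_cont.
apply: sub; exists tau => //; by rewrite /= in_itv /= lexx t0.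
Qed.

Lemma closure_phi (A : set vec) (z e : vec) :
  (forall t : R, 0 < t <= 1 -> A (z + t *: e)) -> closure A z.
Proof.
move=> hA B hB.
have hc := @phi_cont z e 0.
have hB' : nbhs (z + 0 *: e) B by rewrite scale0r addr0.
move: (hc B hB') => /nbhs_ballP [eps eps0 Heps].
pose t := Num.min (eps / 2) 1.
have t0 : 0 < t by rewrite lt_min ltr01 andbT divr_gt0.
have t1 : t <= 1 by rewrite ge_min lexx orbT.
exists (z + t *: e); split; first by apply: hA; rewrite t0 t1.
apply: Heps; rewrite -ball_normE /ball_ /= sub0r normrN gtr0_norm //.
rewrite gt_min; apply/orP; left.
by rewrite ltr_pdivrMr // ltr_pMr // ltr1n.
Qed.

Lemma crooked_iff (g : 'M[R]_3) u q z : SO0 g -> g *m v0 R = u ->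
  crooked_plane u q z <-> C0 (invmx g *m (z - q)).
Proof.
move=> Sg gu; split.
- move=> [g' [y [Sg' g'u Cy ->]]].
  rewrite addrC addKr; apply: stab => //; by rewrite gu g'u.
- move=> Cy; exists g, (invmx g *m (z - q)); split => //.
  by rewrite mulKVmx ?SO0_unit // addrC subrK.
Qed.

Definition ev (Q : R -> Prop) := exists2 tau : R, 0 < tau & forall t, 0 <= t <= tau -> Q t.

Lemma ev_and Q1 Q2 : ev Q1 -> ev Q2 -> ev (fun t => Q1 t /\ Q2 t).
Proof.
move=> [t1 t10 h1] [t2 t20 h2]; exists (Num.min t1 t2); first by rewrite lt_min t10.
move=> t /andP [ht0 ht]; rewrite le_min in ht; case/andP: ht => ht1 ht2.
by split; [apply: h1 | apply: h2]; rewrite ht0.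
Qed.

Lemma ev_impl (Q1 Q2 : R -> Prop) : (forall t, 0 <= t -> Q1 t -> Q2 t) -> ev Q1 -> ev Q2.
Proof. by move=> h [t t0 h1] ; exists t => // s hs; apply/h/h1 => //; case/andP: hs. Qed.

Lemma ev_lin (k m : R) : 0 < k -> ev (fun t => t * `|m| < k).
Proof.
move=> k0; exists (k / (`|m| + 1)); first by rewrite divr_gt0 // ltr_wpDl.
move=> t /andP [t0 ht].
apply: (le_lt_trans (y := k / (`|m| + 1) * `|m|)); first by rewrite ler_wpM2r.
rewrite mulrAC ltr_pdivrMr ?ltr_wpDl // ltr_pM2l //.
by rewrite ltrDl.
Qed.

Lemma ev_pos (a b : R) : 0 < a -> ev (fun t => 0 < a + t * b).
Proof.
move=> a0; apply: ev_impl (ev_lin b a0) => t t0 ht.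
have hb : - `|b| <= b by rewrite lerNl -normrN ler_norm.
have := ler_wpM2l t0 hb; lra.
Qed.

Lemma ev_absgt (a b c d : R) : `|c| < `|a| -> ev (fun t => `|c + t * d| < `|a + t * b|).
Proof.
move=> ca; have k0 : 0 < `|a| - `|c| by rewrite subr_gt0.
apply: ev_impl (ev_lin (`|b| + `|d|) k0) => t t0 ht.
have h1 : `|a| - `|t * b| <= `|a + t * b|.
  exact: lerB_normD.
have h2 : `|c + t * d| <= `|c| + `|t * d| by apply: ler_normD.
rewrite !normrM (ger0_norm t0) in h1 h2.
have he : Num.norm (`|b| + `|d|) = `|b| + `|d| by rewrite ger0_norm // addr_ge0.
rewrite he in ht; lra.
Qed.
Lemma ev_or_l (Q1 Q2 : R -> Prop) : ev Q1 -> ev (fun t => Q1 t \/ Q2 t).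
Proof. by apply: ev_impl => t _; left. Qed.
Lemma ev_or_r (Q1 Q2 : R -> Prop) : ev Q2 -> ev (fun t => Q1 t \/ Q2 t).
Proof. by apply: ev_impl => t _; right. Qed.

Lemma ev_ne (a b : R) : a != 0 -> ev (fun t => a + t * b != 0).
Proof.
move=> a0; apply: ev_impl (@ev_absgt a b 0 0 _) => [t _|].
  by rewrite mulr0 addr0 normr0 normr_gt0.
by rewrite normr0 normr_gt0.
Qed.

Lemma notC0_ev (y e : vec) : ~ C0 y -> ev (fun t => ~ C0 (y + t *: e)).
Proof.
move=> nC.
have D1 : ev (fun t => 0 < c1 y + t * c1 e \/ (c2 y - c3 y) + t * (c2 e - c3 e) != 0).
  case: (ltrP 0 (c1 y)) => h; first by apply: ev_or_l; apply: ev_pos.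
  apply: ev_or_r; apply: ev_ne; rewrite subr_eq0; apply/eqP => E.
  by apply: nC; left; left.
have D2 : ev (fun t => c1 y + t * c1 e != 0 \/ `|c3 y + t * c3 e| < `|c2 y + t * c2 e|).
  case: (eqVneq (c1 y) 0) => h; last by apply: ev_or_l; apply: ev_ne.
  apply: ev_or_r; apply: ev_absgt; rewrite ltNge; apply/negP => hl.
  by apply: nC; left; right.
have D3 : ev (fun t => 0 < - c1 y + t * - c1 e \/ (c2 y + c3 y) + t * (c2 e + c3 e) != 0).
  case: (ltrP (c1 y) 0) => h; first by apply: ev_or_l; apply: ev_pos; rewrite oppr_gt0.
  apply: ev_or_r; apply: ev_ne; apply/eqP => E.
  by apply: nC; right; split => //; apply/eqP; rewrite -subr_eq0 opprK; apply/eqP.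
apply: ev_impl (ev_and D1 (ev_and D2 D3)) => t _ [[h1|h1] [[h2|h2] [h3|h3]]];
  rewrite /C0 /W0m /W0p /S0 /= !c1D !c2D !c3D !c1Z !c2Z !c3Z;
  move=> [[[H1 H2]|[H1 H2]]|[H1 H2]]; try lra;
  try (move: h1; rewrite H2; apply/negP; rewrite negbK; apply/eqP; ring);
  try (move: h2; rewrite H1; apply/negP; rewrite negbK; apply/eqP; ring);
  try (move: h3; rewrite H2; apply/negP; rewrite negbK; apply/eqP; ring);
  try (move: h2; rewrite ltNge; move/negP; apply; apply: H2).
Qed.

Lemma notC_ev u q (x e : vec) : ~ crooked_plane u q x -> ev (fun t => ~ crooked_plane u q (x + t *: e)).
Proof.
move=> nx.
have [[g [Sg gu]]|nog] := pselect (exists g, SO0 g /\ g *m v0 R = u); last first.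
  exists 1 => // t _ [g [y [Sg gu _ _]]]; apply: nog; by exists g.
have := @notC0_ev (invmx g *m (x - q)) (invmx g *m e).
move=> /(_ _) [].
  by move=> hC; apply: nx; apply/(crooked_iff _ _ Sg gu).
move=> tau tau0 ht; exists tau => // t /ht hn hC; apply: hn.
move/(crooked_iff _ _ Sg gu): hC.
by rewrite addrAC mulmxDr -scalemxAr.
Qed.

Lemma half_open u q x (e : vec) : crooked_halfspace u q x ->
  exists2 tau : R, 0 < tau & crooked_halfspace u q (x + tau *: e).
Proof.
move=> [w [w1 w2 w3 cx]].
have nx : ~ crooked_plane u q x by have := connected_component_sub cx.
have [tau tau0 ht] := notC_ev e nx.
exists tau => //; exists w; split => //.
apply: comp_seg => //; first exact: ltW.
Qed.

Lemma conv_pos (a b s : R) : 0 < a -> 0 < b -> 0 <= s <= 1 -> 0 < a + s * (b - a).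
Proof.
move=> a0 b0 /andP [s0 s1]; case: (lerP a b) => hab.
  have : 0 <= s * (b - a) by rewrite mulr_ge0 // subr_ge0.
  lra.
have : s * (a - b) <= 1 * (a - b) by rewrite ler_wpM2r // subr_ge0 ltW.
rewrite mul1r; have -> : s * (b - a) = - (s * (a - b)) by ring.
lra.
Qed.

Lemma notC0_of (x : vec) :
  (0 < c1 x /\ 0 < c2 x + c3 x) \/ (c1 x < 0 /\ 0 < c2 x - c3 x) \/ (c2 x != 0 /\ c3 x = 0)
  -> ~ C0 x.
Proof.
rewrite /C0 /W0m /W0p /S0 /=.
move=> [[h1 h2]|[[h1 h2]|[h1 h2]]] [[[H1 H2]|[H1 H2]]|[H1 H2]]; try lra.
all: try by move: h1; rewrite H2 h2 ?oppr0 eqxx.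
all: by move: H2; rewrite h2 normr0 normr_le0; apply/negP.
Qed.

Lemma segE1 (z1 z2 : vec) (s : R) : c1 (z1 + s *: (z2 - z1)) = c1 z1 + s * (c1 z2 - c1 z1).
Proof. by rewrite c1D c1Z c1D c1N. Qed.
Lemma segE2 (z1 z2 : vec) (s : R) : c2 (z1 + s *: (z2 - z1)) = c2 z1 + s * (c2 z2 - c2 z1).
Proof. by rewrite c2D c2Z c2D c2N. Qed.
Lemma segE3 (z1 z2 : vec) (s : R) : c3 (z1 + s *: (z2 - z1)) = c3 z1 + s * (c3 z2 - c3 z1).
Proof. by rewrite c3D c3Z c3D c3N. Qed.

Lemma stem_closure (u q z : vec) : stem u q z -> closure (crooked_halfspace u q) z.
Proof.
move=> [g [y [Sg gu Sy ->]]].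
have ug := SO0_unit Sg.
pose F (z' : vec) := q + g *m z'.
have aF : affine F by exists g, q => z'; rewrite /F addrC.
have notC : forall z', ~ C0 z' -> ~ crooked_plane u q (F z').
  by move=> z' nz /(crooked_iff _ _ Sg gu); rewrite /F (addrC q) addrK mulKmx.
have step : forall b (z1 z2 : vec), (forall s : R, 0 <= s <= 1 -> ~ C0 (z1 + s *: (z2 - z1))) ->
    connected_component (~` crooked_plane u q) b (F z1) ->
    connected_component (~` crooked_plane u q) b (F z2).
  move=> b z1 z2 hs cz.
  have -> : F z2 = F z1 + 1 *: (F z2 - F z1) by rewrite scale1r addrC subrK.
  apply: comp_seg => // t ht; rewrite -affine_seg //; exact/notC/hs.
pose g20 := ent g 2 0; pose g22 := ent g 2 2.
have g22p : 0 < g22 by case: Sg => _ [_].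
pose T := 2 + `|g20| / g22.
have T2 : 2 <= T by rewrite lerDl divr_ge0 // ltW.
pose w0 : vec := mkv 1 0 T.
have nw0 : ~ C0 w0.
  apply: notC0_of; left; rewrite /w0 mkv1 mkv2 mkv3; lra.
have base : connected_component (~` crooked_plane u q) (q + g *m w0) (F w0).
  by apply: connected_component_refl; exact: notC.
have hw1 : Bform (g *m w0) (g *m w0) < 0.
  rewrite (proj1 Sg) /Bform /w0 mkv1 mkv2 mkv3.
  have : 4 <= T * T by rewrite (_ : 4 = 2 * 2); [apply: ler_pM; lra | ring].
  lra.
have hw2 : 0 < c3 (g *m w0).
  rewrite mulE3 /w0 mkv1 mkv2 mkv3 -/g20 -/g22.
  have -> : g22 * T = 2 * g22 + `|g20|.
    rewrite /T mulrDr mulrCA divff; last by rewrite gt_eqF.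
    by rewrite mulr1 mulrC.
  have : - g20 <= `|g20| by rewrite -normrN ler_norm.
  lra.
have hw3 : 0 < Bform (g *m w0) u.
  rewrite -gu (proj1 Sg) /Bform /w0 /v0 !mkv1 !mkv2 !mkv3; lra.
have memH : forall z', (forall s : R, 0 <= s <= 1 -> ~ C0 (w0 + s *: (z' - w0))) ->
    crooked_halfspace u q (F z').
  move=> z' hz; exists (g *m w0); split => //.
  exact: step base.
case: Sy => y1 y23.
case: (lerP 0 (c3 y)) => hy3.
- have hy : - c2 y <= c3 y.
    move: (ler_norm (- c2 y)); rewrite normrN => hn; rewrite (ger0_norm hy3) in y23; lra.
  apply: (@closure_phi _ _ (g *m mkv 1 0 1)) => t /andP [t0 t1].
  have -> : q + g *m y + t *: (g *m mkv 1 0 1) = F (y + t *: mkv 1 0 1).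
    by rewrite /F mulmxDr scalemxAr addrA.
  apply: memH => s0 hs; apply: notC0_of; left.
  rewrite segE1 segE2 segE3 !c1D !c2D !c3D !c1Z !c2Z !c3Z /w0 !mkv1 !mkv2 !mkv3 y1.
  have := conv_pos (@ltr01 R) t0 hs.
  have := @conv_pos T (c2 y + c3 y + t) s0 ltac:(lra) ltac:(lra) hs.
  lra.
- have hy : c3 y <= c2 y.
    move: (ler_norm (- c2 y)); rewrite normrN => hn; rewrite (ltr0_norm hy3) in y23; lra.
  apply: (@closure_phi _ _ (g *m mkv (-1) 0 (-1))) => t /andP [t0 t1].
  have -> : q + g *m y + t *: (g *m mkv (-1) 0 (-1)) = F (y + t *: mkv (-1) 0 (-1)).
    by rewrite /F mulmxDr scalemxAr addrA.
  exists (g *m w0); split => //.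
  apply: (@step _ (mkv (-1) 3 0)); last apply: (@step _ (mkv 1 3 0)); last apply: (@step _ w0) => //.
  + move=> s0 hs; apply: notC0_of; right; left.
    rewrite segE1 segE2 segE3 !c1D !c2D !c3D !c1Z !c2Z !c3Z !mkv1 !mkv2 !mkv3 y1.
    have := conv_pos (@ltr01 R) t0 hs.
    have := @conv_pos 3 (c2 y - c3 y + t) s0 ltac:(lra) ltac:(lra) hs.
    lra.
  + move=> s0 hs; apply: notC0_of; right; right.
    rewrite segE2 segE3 !mkv2 !mkv3; split; last by ring.
    rewrite subrr mulr0 addr0; apply/eqP; lra.
  + move=> s0 hs; apply: notC0_of; left.
    rewrite segE1 segE2 segE3 /w0 !mkv1 !mkv2 !mkv3.
    have := @conv_pos T 3 s0 ltac:(lra) ltac:(lra) hs.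
    lra.
Qed.

Lemma dotE (x y : vec) : dot x y = c1 x * c1 y + c2 x * c2 y + c3 x * c3 y.
Proof. by rewrite /dot sum3 cE1 cE1 cE2 cE2 cE3 cE3. Qed.

Lemma dot_pos (d : vec) : d != 0 -> 0 < dot d d.
Proof.
move=> d0; rewrite dotE.
have h : c1 d != 0 \/ c2 d != 0 \/ c3 d != 0.
  case: (eqVneq (c1 d) 0) => h1; last by left.
  case: (eqVneq (c2 d) 0) => h2; last by right; left.
  case: (eqVneq (c3 d) 0) => h3; last by right; right.
  by move: d0; rewrite (@vec_eq d 0) ?eqxx // /c1 /c2 /c3 mxE.
have s1 := sqr_ge0 (c1 d); have s2 := sqr_ge0 (c2 d); have s3 := sqr_ge0 (c3 d).
rewrite !expr2 in s1 s2 s3.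
case: h => [h|[h|h]].
- have : 0 < c1 d ^+ 2 by rewrite lt_def sqrf_eq0 h sqr_ge0.
  rewrite expr2; lra.
- have : 0 < c2 d ^+ 2 by rewrite lt_def sqrf_eq0 h sqr_ge0.
  rewrite expr2; lra.
- have : 0 < c3 d ^+ 2 by rewrite lt_def sqrf_eq0 h sqr_ge0.
  rewrite expr2; lra.
Qed.

Lemma plane_comb (p a b x y z : vec) (c : R) : plane p a b x -> plane p a b y -> plane p a b z ->
  plane p a b (x + c *: (y - z)).
Proof.
move=> [s1 [t1 ->]] [s2 [t2 ->]] [s3 [t3 ->]].
exists (s1 + c * (s2 - s3)), (t1 + c * (t2 - t3)).
apply: vec_eq.
- rewrite !(c1D, c1Z, c1N); ring.
- rewrite !(c2D, c2Z, c2N); ring.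
- rewrite !(c3D, c3Z, c3N); ring.
Qed.

Lemma rho_diff (x y x' y' : vec) : x - y = x' - y' -> rho x y = rho x' y'.
Proof.
move=> E; rewrite /rho; congr Num.sqrt; apply: eq_bigr => i _.
by have := congr1 (fun M : vec => M i 0) E; rewrite !mxE => ->.
Qed.

End H.

Theorem mainTheorem12 (R : realType) (m : nat)
  (h : 'I_m -> 'M[R]_3 * 'cV[R]_3) (hSO : forall i, SO0 (h i).1)
  (* H_i^j = crooked_halfspace (u i j) (q i j); j = true is +1, false is -1 *)
  (u q : 'I_m -> bool -> 'cV[R]_3)
  (hu : forall i j, Bform (u i j) (u i j) = 1)
  (hdisj : forall i j i' j', (i, j) != (i', j') ->
     crooked_halfspace (u i j) (q i j) `&` crooked_halfspace (u i' j') (q i' j') = set0)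
  (hpair : forall i, act (h i) @` crooked_halfspace (u i false) (q i false)
                     = ~` closure (crooked_halfspace (u i true) (q i true)))
  (delta0 : R) (hdelta0 : 0 < delta0)
  (hdelta0P : forall i j i' j', (i, j) != (i', ~~ j') ->
     nbhd (~` crooked_halfspace (u i j) (q i j)) delta0 `<=`
     ~` (hpow (h i) j @` closure (crooked_halfspace (u i' j') (q i' j'))))
  (p : 'cV[R]_3)
  (hp : ~ (exists2 g, in_Gamma h g &
            (g @` closure (~` \bigcup_(ij in [set: 'I_m * bool])
                 closure (crooked_halfspace (u ij.1 ij.2) (q ij.1 ij.2)))) p))
  (s : nat -> 'I_m * bool)
  (hs : forall k, s k != ((s k.+1).1, ~~ (s k.+1).2))
  (hnest : forall k,
     gam h s k.+1 @` crooked_halfspace (u (s k.+1).1 (s k.+1).2) (q (s k.+1).1 (s k.+1).2)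
     `<` gam h s k @` crooked_halfspace (u (s k).1 (s k).2) (q (s k).1 (s k).2))
  (hpin : forall k,
     (gam h s k @` crooked_halfspace (u (s k).1 (s k).2) (q (s k).1 (s k).2)) p)
  (hangle : (angle (u (s O).1 (s O).2) < (pi / 2)%:E)%E)
  (a b : 'cV[R]_3) (hdef : definite_dir a b)
  (hvert : forall g, in_Gamma h g -> forall i j, ~ plane p a b (g (q i j)))
  (nu : set 'cV[R]_3) (n0 d : 'cV[R]_3) (hd : d != 0)
  (hnu : nu = line n0 d) (hnuP : nu `<=` plane p a b)
  (hnudir : exists v w, [/\ w != v,
      plane p a b `&` (gam h s 0 @` stem (u (s O).1 (s O).2) (q (s O).1 (s O).2))
        = segment v w & exists c : R, d = c *: (w - v)])
  (L : nat -> set 'cV[R]_3)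
  (hL : forall k, exists v (sigma : R), [/\
      (* v is a vertex of the zigzag: an endpoint of the segment P cap stem_k *)
      exists2 w, w != v &
        plane p a b `&` (gam h s k @` stem (u (s k).1 (s k).2) (q (s k).1 (s k).2))
          = segment v w,
      sigma = 1 \/ sigma = -1,
      (* L_k: the line of P through v perpendicular to nu *)
      L k = [set x | plane p a b x /\ dot (x - v) d = 0] &
      (* the half-plane Pi_k of P bounded by L_k contains H_k cap P *)
      (gam h s k @` crooked_halfspace (u (s k).1 (s k).2) (q (s k).1 (s k).2))
        `&` plane p a b `<=` [set x | plane p a b x /\ 0 <= sigma * dot (x - v) d]]) :
  forall delta : R, delta <= delta0 -> forall k : nat,
    (gam h s k @` nbhd (gam h s k @^-1` L k) delta) `&` L k.+1 = set0.
Proof.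
move=> delta hdel k.
have HA : forall y, L k ((gam h s k) y) ->
    ~ crooked_halfspace (u (s k).1 (s k).2) (q (s k).1 (s k).2) y.
  move=> y Ly Hy.
  have [v [sig [[w wv Eseg] hsig EL Hhalf]]] := hL k.
  rewrite EL in Ly; case: Ly => Py dy.
  have Pn0 : plane p a b n0 by apply: hnuP; rewrite hnu; exists 0; rewrite scale0r addr0.
  have Pn1 : plane p a b (n0 + d) by apply: hnuP; rewrite hnu; exists 1; rewrite scale1r.
  have [z1 Ez1] := @gam_surj R m h s k hSO ((gam h s k) y - sig *: d).
  have [tau tau0 Htau] := half_open (z1 - y) Hy.
  have Eim : (gam h s k) (y + tau *: (z1 - y)) = (gam h s k) y + (- (tau * sig)) *: ((n0 + d) - n0).
    rewrite affine_seg; last exact: affine_gam.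
    rewrite Ez1.
    apply: vec_eq.
    - rewrite !(c1D, c1Z, c1N); ring.
    - rewrite !(c2D, c2Z, c2N); ring.
    - rewrite !(c3D, c3Z, c3N); ring.
  have := Hhalf ((gam h s k) (y + tau *: (z1 - y))); case.
    split; first by exists (y + tau *: (z1 - y)).
    by rewrite Eim; apply: plane_comb.
  move=> _; rewrite Eim.
  have key : dot ((gam h s k) y + - (tau * sig) *: (n0 + d - n0) - v) d
      = dot ((gam h s k) y - v) d + - (tau * sig) * dot d d.
    rewrite !dotE !(c1D, c1Z, c1N, c2D, c2Z, c2N, c3D, c3Z, c3N); ring.
  rewrite key dy add0r.
  have := mulr_gt0 tau0 (dot_pos hd).
  by case: hsig => ->; lra.
have [v' [sig' [[w' wv' Eseg'] hsig' EL' Hhalf']]] := hL k.+1.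
apply/seteqP; split => // x [[z' [y'' Ly rz] <-] Lk1].
have Pv' : (plane p a b `&` (gam h s k.+1 @` stem (u (s k.+1).1 (s k.+1).2) (q (s k.+1).1 (s k.+1).2))) v'.
  rewrite Eseg'; exists 0; split; first by rewrite lexx ler01.
  by rewrite subr0 scale1r scale0r addr0.
case: Pv' => Pv' [y0 Sy0 Ey0].
have Cy0 := stem_closure Sy0.
set w := hpow (h (s k).1) (s k).2 y0.
have Ew : (gam h s k) w = v' by rewrite -Ey0.
set y3 := y'' + (w - z').
have Ly3 : L k ((gam h s k) y3).
  have [v [sig [_ _ EL _]]] := hL k.
  rewrite /= EL in Ly *; case: Ly => Py dy.
  rewrite EL' in Lk1; case: Lk1 => Pz dz.
  rewrite /y3 affine_tr; last exact: affine_gam.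
  rewrite Ew; split.
    by have := plane_comb 1 Py Pv' Pz; rewrite scale1r.
  have -> : dot ((gam h s k) y'' + (v' - (gam h s k) z') - v) d = dot ((gam h s k) y'' - v) d - dot ((gam h s k) z' - v') d.
    rewrite !dotE !(c1D, c1Z, c1N, c2D, c2Z, c2N, c3D, c3Z, c3N); ring.
  by rewrite dy dz subrr.
have nH := HA _ Ly3.
have Nw : nbhd (~` crooked_halfspace (u (s k).1 (s k).2) (q (s k).1 (s k).2)) delta0 w.
  exists y3 => //.
  rewrite (@rho_diff _ _ _ z' y''); first exact: lt_le_trans rz hdel.
  apply: vec_eq.
  - rewrite /y3 !(c1D, c1Z, c1N); ring.
  - rewrite /y3 !(c2D, c2Z, c2N); ring.
  - rewrite /y3 !(c3D, c3Z, c3N); ring.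
have hsk : ((s k).1, (s k).2) != ((s k.+1).1, ~~ (s k.+1).2).
  by move: (hs k); case: (s k).
apply: (hdelta0P _ _ _ _ hsk w Nw).
by exists y0.
Qed.
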